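(* Let $\mathbf{k}$ be a field, $(I,\le)$ a directed partially ordered set, and $\mathscr{M}=(M_i,\phi_{i\to j})$ a weakly non-trivial projectively transitive system of $\mathbf{k}$-vector spaces over $I$. For $i_0\in I$ let $\hat M_{i_0}$ be the direct limit of the (genuine) transitive system $\mathscr{M}_{(i_0)}$, and for $i_0\le j_0$ let $\hat\theta_{i_0\to j_0}\colon\hat M_{i_0}\to\hat M_{j_0}$ be the map induced by the maps $\theta^{i_0,j_0}_{m\to n}$. Then (1) the spaces $\hat M_{i_0}$ ($i_0\in I$) together with the maps $\hat\theta_{i_0\to j_0}$ form a projectively transitive system over $I$; and (2) each $\hat\theta_{i_0\to j_0}$ is an isomorphism of $\mathbf{k}$-vector spaces.
   Context: Write $a\doteq b$ if $a=u\,b$ for some unit $u\in\mathbf{k}^\times$. A projectively transitive system over $(I,\le)$ consists of $\mathbf{k}$-modules $M_i$ and homomorphisms $\phi_{i\to j}\colon M_i\to M_j$ for $i\le j$ with $\phi_{i\to i}\doteq\mathrm{id}$ and $\phi_{j\to k}\circ\phi_{i\to j}\doteq\phi_{i\to k}$; it is a (genuine) transitive system if these hold with $=$. It is weakly non-trivial if every $M_i\neq0$ and every $\phi_{i\to j}\neq0$. Given $i_0$, set $U(i_0)=\{i\in I: i\ge i_0\}$ and define the transitive system $\mathscr{M}_{(i_0)}=(M_i,\psi_{j\to k})$ over $U(i_0)$ by $\psi_{i_0\to j}=\phi_{i_0\to j}$ and, for $j\le k$ in $U(i_0)$, $\psi_{j\to k}=\alpha\,\phi_{j\to k}$ where $\alpha\in\mathbf{k}^\times$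 is the unique unit with $\alpha\,\phi_{j\to k}\circ\phi_{i_0\to j}=\phi_{i_0\to k}$. For $i_0\le j_0$, $m\in U(i_0)$, $n\in U(j_0)$ with $m\le n$, define $\theta^{i_0,j_0}_{m\to n}=\alpha\,\phi_{m\to n}$ where $\alpha\in\mathbf{k}^\times$ is the unique unit with $\alpha\,\phi_{m\to n}\circ\phi_{i_0\to m}=\phi_{j_0\to n}\circ\phi_{i_0\to j_0}$; these maps are compatible with the transitive systems and induce $\hat\theta_{i_0\to j_0}$ on direct limits. *)

(* Defs.v *)
From HB Require Import structures.
From mathcomp Require Import all_boot all_order all_algebra.
From Stdlib Require Import ClassicalEpsilon.
Unset Strict Implicit. Unset Printing Implicit Defensive.
Import Order.TTheory GRing.Theory Num.Theory.
Local Open Scope ring_scope.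

Section ProjSys.
Variable K : fieldType.

Definition proj_eq (U V : lmodType K) (f g : U -> V) : Prop :=
  exists2 u : K, u != 0 & forall x, f x = u *: g x.

(* "the unique unit alpha with alpha f = g" (chosen classically; the
   hypotheses of the theorem guarantee existence and uniqueness). *)
Definition scal_coef (U V : lmodType K) (f g : U -> V) : K :=
  epsilon (inhabits 0) (fun a : K => a != 0 /\ forall x, a *: f x = g x).

Variables (d : Order.disp_t) (I : porderType d).

Definition directed : Prop := forall i j : I, exists k, (i <= k)%O /\ (j <= k)%O.

Variable M : I -> lmodType K.
Variable phi : forall i j : I, {linear M i -> M j}.
(* only the values phi i j with i <= j are relevant *)

Definition proj_trans_sys : Prop :=
  (forall i, proj_eq _ _ (phi i i) id) /\
  (forall i j k, (i <= j)%O -> (j <= k)%O ->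
     proj_eq _ _ (phi j k \o phi i j) (phi i k)).

Definition weakly_nontrivial : Prop :=
  (forall i, exists x : M i, x != 0) /\
  (forall i j, (i <= j)%O -> exists x : M i, phi i j x != 0).

(* The transitive system M_(i0) over U(i0) = {i | i0 <= i}:
   psi_{i0 -> k} = phi_{i0 -> k} for k <> i0, and otherwise
   psi_{j -> k} = alpha phi_{j -> k} with alpha phi_{j->k} o phi_{i0->j} = phi_{i0->k}. *)
Definition psi (i0 j k : I) : M j -> M k :=
  fun x => (if (j == i0) && (k != i0) then 1
            else scal_coef _ _ (phi j k \o phi i0 j) (phi i0 k)) *: phi j k x.

Definition theta (i0 j0 m n : I) : M m -> M n :=
  fun x => scal_coef _ _ (phi m n \o phi i0 m) (phi j0 n \o phi i0 j0) *: phi m n x.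

(* (L, f) is a direct limit (colimit in k-vector spaces) of the transitive
   system M_(i0) over U(i0); f m is only relevant for i0 <= m. *)
Definition is_dirlim (i0 : I) (L : lmodType K) (f : forall m, {linear M m -> L}) : Prop :=
  (forall j k, (i0 <= j)%O -> (j <= k)%O -> forall x, (f k) (psi i0 j k x) = (f j) x) /\
  (forall (W : lmodType K) (g : forall m, {linear M m -> W}),
     (forall j k, (i0 <= j)%O -> (j <= k)%O -> forall x, (g k) (psi i0 j k x) = (g j) x) ->
     exists h : {linear L -> W},
       (forall j, (i0 <= j)%O -> forall x, h ((f j) x) = (g j) x) /\
       (forall h' : {linear L -> W},
          (forall j, (i0 <= j)%O -> forall x, h' ((f j) x) = (g j) x) -> h' =1 h)).

End ProjSys.

Arguments proj_eq {K U V} f g.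
Arguments scal_coef {K U V} f g.
Arguments directed {d} I.
Arguments proj_trans_sys {K d I M} phi.
Arguments weakly_nontrivial {K d I M} phi.
Arguments psi {K d I M} phi i0 j k _.
Arguments theta {K d I M} phi i0 j0 m n _.
Arguments is_dirlim {K d I M} phi i0 {L} f.

(* Main.v *)
Require Import Defs.
From HB Require Import structures.
From mathcomp Require Import all_boot all_order all_algebra.
From mathcomp Require Import ring.
From Stdlib Require Import ClassicalEpsilon Classical.
Import Order.TTheory GRing.Theory Num.Theory.
Local Open Scope ring_scope.

Set Implicit Arguments.
Section Aux.
Variables (K : fieldType) (d : Order.disp_t) (I : porderType d)
  (M : I -> lmodType K) (phi : forall i j : I, {linear M i -> M j}).
Hypothesis Hpt : proj_trans_sys phi.
Hypothesis Hwn : weakly_nontrivial phi.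

Lemma scP (U V : lmodType K) (F G : U -> V) :
  (exists a, a != 0 /\ forall x, a *: F x = G x) ->
  scal_coef F G != 0 /\ forall x, scal_coef F G *: F x = G x.
Proof. move=> H; rewrite /scal_coef; exact: (epsilon_spec (inhabits 0) _ H). Qed.

Lemma sc_cancel {V : lmodType K} {a b : K} {v : V} :
  v != 0 -> a *: v = b *: v -> a = b.
Proof.
move=> nv e; apply/eqP; rewrite -subr_eq0.
have : (a - b) *: v == 0 by rewrite scalerBl e subrr.
by rewrite scaler_eq0 (negbTE nv) orbF.
Qed.

Lemma uP i : exists2 u : K, u != 0 & forall x, phi i i x = u *: x.
Proof. exact: (Hpt.1 i). Qed.

Lemma nzP {i n} : (i <= n)%O -> exists z, phi i n z != 0.
Proof. exact: (Hwn.2 i n). Qed.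

Definition tt i j n := scal_coef (phi i n) (phi j n \o phi i j).

Lemma ttP {i j n} : (i <= j)%O -> (j <= n)%O ->
  tt i j n != 0 /\ forall y, tt i j n *: phi i n y = phi j n (phi i j y).
Proof.
move=> ij jn; apply: scP; case: (Hpt.2 i j n ij jn) => u u0 Hu.
by exists u; split=> // y; rewrite (Hu y).
Qed.

Lemma bP {i j k} : (i <= j)%O -> (j <= k)%O ->
  scal_coef (phi j k \o phi i j) (phi i k) != 0 /\
  forall y, scal_coef (phi j k \o phi i j) (phi i k) *: phi j k (phi i j y) = phi i k y.
Proof.
move=> ij jk; apply: scP; case: (Hpt.2 i j k ij jk) => u u0 Hu.
exists u^-1; split; first by rewrite invr_eq0.
by move=> y; have := Hu y => /= ->; rewrite scalerA mulVf // scale1r.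
Qed.

Lemma psi_jj i j x : (i <= j)%O -> psi phi i j j x = x.
Proof.
move=> ij; rewrite /psi.
have -> : (j == i) && (j != i) = false by case: (j == i).
case: (uP j) => u u0 Hu.
have [_ Hs] : scal_coef (phi j j \o phi i j) (phi i j) != 0 /\
   forall y, scal_coef (phi j j \o phi i j) (phi i j) *: (phi j j \o phi i j) y = phi i j y.
  apply: scP; exists u^-1; split; first by rewrite invr_eq0.
  by move=> y /=; rewrite Hu scalerA mulVf // scale1r.
set s := scal_coef _ _ in Hs *.
case: (nzP ij) => z nz.
have e : s * u = 1.
  apply: (sc_cancel nz); rewrite -scalerA -Hu scale1r; exact: (Hs z).
by rewrite Hu scalerA e scale1r.
Qed.

Lemma Hn (L0 L1 : lmodType K) (f0 : forall m, {linear M m -> L0})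
  (f1 : forall m, {linear M m -> L1}) (H : {linear L0 -> L1}) i0 j0 :
  (i0 <= j0)%O ->
  (forall m n, (i0 <= m)%O -> (j0 <= n)%O -> (m <= n)%O ->
     forall x, H (f0 m x) = f1 n (theta phi i0 j0 m n x)) ->
  forall n, (j0 <= n)%O -> forall y, H (f0 n y) = tt i0 j0 n *: f1 n y.
Proof.
move=> ij hyp n jn y; have i0n := le_trans ij jn.
rewrite (hyp n n i0n jn (lexx n)) /theta.
case: (uP n) => u u0 Hu; case: (ttP ij jn) => t0 Ht; case: (nzP i0n) => z nz.
have [_ Hs] : scal_coef (phi n n \o phi i0 n) (phi j0 n \o phi i0 j0) != 0 /\
  forall x, scal_coef (phi n n \o phi i0 n) (phi j0 n \o phi i0 j0) *:
     (phi n n \o phi i0 n) x = (phi j0 n \o phi i0 j0) x.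
  apply: scP; exists (tt i0 j0 n / u); split; first by rewrite mulf_neq0 ?invr_eq0.
  by move=> x /=; rewrite Hu scalerA mulfVK // Ht.
set s := scal_coef _ _ in Hs *.
have e : s * u = tt i0 j0 n.
  apply: (sc_cancel nz); rewrite -scalerA -Hu Ht; exact: (Hs z).
by rewrite Hu scalerA e linearZ.
Qed.

Lemma ext_dl (dir : directed I) i (L W : lmodType K) (f : forall m, {linear M m -> L})
  (h1 h2 : {linear L -> W}) k :
  is_dirlim phi i f ->
  (forall n, (i <= n)%O -> (k <= n)%O -> forall y, h1 (f n y) = h2 (f n y)) ->
  forall x, h1 x = h2 x.
Proof.
move=> [comp univ] hyp.
have cg : forall j k', (i <= j)%O -> (j <= k')%O -> forall x,
    (h2 \o f k') (psi phi i j k' x) = (h2 \o f j) x.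
  by move=> j k' ij jk x /=; rewrite comp.
have [h [hP huniq]] := univ W (fun m => h2 \o f m) cg.
have e1 : h1 =1 h.
  apply: huniq => j ij x /=; case: (dir j k) => n [jn kn].
  rewrite -(comp j n ij jn x); apply: hyp => //; exact: le_trans ij jn.
have e2 : h2 =1 h by apply: huniq.
by move=> x; rewrite e1 e2.
Qed.

End Aux.
Unset Implicit Arguments.

Theorem mainTheorem6 (K : fieldType) (d : Order.disp_t) (I : porderType d)
  (M : I -> lmodType K) (phi : forall i j : I, {linear M i -> M j})
  (hatM : I -> lmodType K) (f : forall i0 m : I, {linear M m -> hatM i0})
  (hattheta : forall i0 j0 : I, {linear hatM i0 -> hatM j0}) :
  directed I ->
  proj_trans_sys phi ->
  weakly_nontrivial phi ->
  (forall i0, is_dirlim phi i0 (f i0)) ->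
  (forall i0 j0, (i0 <= j0)%O ->
     forall m n, (i0 <= m)%O -> (j0 <= n)%O -> (m <= n)%O ->
       forall x, (hattheta i0 j0) ((f i0 m) x) = (f j0 n) (theta phi i0 j0 m n x)) ->
  proj_trans_sys hattheta /\
  (forall i0 j0, (i0 <= j0)%O -> bijective (hattheta i0 j0)).
Proof.
move=> dir Hpt Hwn Hdl Hth.
have HN : forall i0 j0, (i0 <= j0)%O -> forall n, (j0 <= n)%O -> forall y,
    hattheta i0 j0 (f i0 n y) = tt I M phi i0 j0 n *: f j0 n y.
  by move=> i0 j0 ij; exact: (Hn Hpt Hwn (f i0) (f j0) (hattheta i0 j0) i0 j0 ij (Hth i0 j0 ij)).
have P1 : forall i, proj_eq (hattheta i i) id.
  move=> i; case: (uP Hpt i) => u u0 Hu; exists u => // x.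
  have -> : u *: id x = (u \*: (idfun : {linear hatM i -> hatM i})) x by [].
  apply: (ext_dl dir (hattheta i i) _ i (Hdl i)) => n ii _ y.
  rewrite (HN i i (lexx i) n ii y) /=; congr (_ *: _).
  case: (ttP Hpt (lexx i) ii) => _ Ht; case: (nzP Hwn ii) => z nz.
  apply: (sc_cancel nz); by rewrite Ht Hu linearZ.
have P2 : forall i j k, (i <= j)%O -> (j <= k)%O ->
    proj_eq (hattheta j k \o hattheta i j) (hattheta i k).
  move=> i j k ij jk; have ik := le_trans ij jk.
  case: (ttP Hpt ij jk) => t0 Ht.
  exists (tt I M phi i j k) => // x.
  have -> : tt I M phi i j k *: hattheta i k x =
     (tt I M phi i j k \*: hattheta i k) x by [].
  apply: (ext_dl dir (hattheta j k \o hattheta i j) _ k (Hdl i)) => n iin kn y /=.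
  have jn := le_trans jk kn.
  rewrite (HN i j ij n jn y) linearZZ (HN j k jk n kn y) (HN i k ik n kn y) !scalerA.
  congr (_ *: _).
  case: (ttP Hpt ij jn) => _ Hijn; case: (ttP Hpt jk kn) => _ Hjkn.
  case: (ttP Hpt ik kn) => _ Hikn; case: (nzP Hwn iin) => z nz.
  apply: (sc_cancel nz).
  rewrite (mulrC (tt I M phi i j n)) -[LHS]scalerA [in LHS]Hijn [in LHS]Hjkn.
  by rewrite -[RHS]scalerA [in RHS]Hikn -linearZZ Ht.
split; first by split.
move=> i0 j0 ij.
case: (eqVneq i0 j0) => [<-|nij].
  case: (P1 i0) => u u0 Hu; exists (fun x => u^-1 *: x) => x.
    by rewrite Hu scalerA mulVf // scale1r.
  by rewrite Hu scalerA mulfV // scale1r.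
pose t := tt I M phi i0 j0.
have [bnm Hb] : exists bnm : bool, if bnm then (exists k1, (j0 <= k1)%O /\ k1 != j0)
    else (forall k, (j0 <= k)%O -> k = j0).
  case: (classic (exists k1, (j0 <= k1)%O /\ k1 != j0)) => h; first by exists true.
  exists false => k jk; apply/eqP; apply: contraT => nk; exfalso; apply: h; by exists k.
have [kb [jkb Hkb]] : exists kb, (j0 <= kb)%O /\
    forall n, (kb <= n)%O -> ((n == j0) && bnm) = false.
  move: Hb; case: bnm => [[k1 [jk1 nk1]] | Hb].
    exists k1; split => // n kn; rewrite andbT; apply/negbTE/eqP => e.
    rewrite e in kn; move/eqP: nk1; apply; apply: le_anti; by rewrite kn jk1.
  by exists j0; split => // n _; rewrite andbF.
pose c n := if (n == j0) && bnm then 1 else (t n)^-1.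
have tnz : forall n, (j0 <= n)%O -> t n != 0 := fun n jn => (ttP Hpt ij jn).1.
have gcomp : forall j k, (j0 <= j)%O -> (j <= k)%O -> forall x,
    (c k \*: f i0 k) (psi phi j0 j k x) = (c j \*: f i0 j) x.
  move=> j k jj jk x /=.
  case: (eqVneq j k) => [<-|njk]; first by rewrite (psi_jj Hpt Hwn).
  have i0j := le_trans ij jj; have i0k := le_trans i0j jk; have j0k := le_trans jj jk.
  have nk : k != j0.
    apply/eqP => e; move/eqP: njk; apply; apply: le_anti; by rewrite jk e jj.
  case: (eqVneq j j0) => [ej|nj].
    subst j.
    have bt : bnm = true.
      case E: bnm => //; rewrite E in Hb; move: njk; by rewrite (Hb k jk) eqxx.
    rewrite /c eqxx bt (negbTE nk) /= /psi eqxx nk /= scale1r.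
    rewrite -((Hdl i0).1 j0 k ij jk x) /psi (eq_sym j0 i0) (negbTE nij) /= linearZZ scale1r.
    congr (_ *: _).
    case: (bP Hpt ij jk) => _ Hbb; case: (ttP Hpt ij jk) => _ Htk; case: (nzP Hwn i0k) => z nz.
    have e : scal_coef (phi j0 k \o phi i0 j0) (phi i0 k) * t k = 1.
      apply: (sc_cancel nz); by rewrite -scalerA Htk Hbb scale1r.
    apply: (mulIf (tnz k jk)); by rewrite mulVf ?e // tnz.
  have nji0 : j != i0.
    apply/eqP => e; move/eqP: nij; apply; apply: le_anti; by rewrite ij -e jj.
  rewrite /c (negbTE nj) (negbTE nk) /= /psi (negbTE nj) /= linearZZ.
  rewrite -((Hdl i0).1 j k i0j jk x) /psi (negbTE nji0) /=.
  rewrite [f i0 k (_ *: _)]linearZZ !scalerA.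
  congr (_ *: _).
  set a := scal_coef (phi j k \o phi j0 j) (phi j0 k).
  set b := scal_coef (phi j k \o phi i0 j) (phi i0 k).
  case: (bP Hpt jj jk) => _ Ha; case: (bP Hpt i0j jk) => _ Hb'.
  case: (ttP Hpt ij jj) => _ Htj; case: (ttP Hpt ij j0k) => _ Htk.
  case: (nzP Hwn i0k) => z nz.
  have w1 : a *: phi j k (phi j0 j (phi i0 j0 z)) = t k *: phi i0 k z.
    by rewrite Ha Htk.
  have w2 : b *: phi j k (phi j0 j (phi i0 j0 z)) = t j *: phi i0 k z.
    by rewrite -Htj linearZZ scalerA mulrC -scalerA Hb'.
  have e : a * t j = b * t k.
    apply: (sc_cancel nz); by rewrite -!scalerA -w2 -w1 !scalerA mulrC.
  have tj0 := tnz j jj; have tk0 := tnz k j0k.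
  apply: (mulIf tk0).
  rewrite -[LHS]mulrA (mulrC a) [LHS]mulrA mulVf // mul1r.
  by rewrite -mulrA -e mulrCA mulVf // mulr1.
have [G [GP _]] := (Hdl j0).2 (hatM i0) (fun m => c m \*: f i0 m) gcomp.
exists G.
  apply: (ext_dl dir (G \o hattheta i0 j0) idfun kb (Hdl i0)) => n i0n kbn y /=.
  have jn := le_trans jkb kbn.
  rewrite (HN i0 j0 ij n jn y) linearZZ (GP n jn y) /= /c (Hkb n kbn).
  by rewrite scalerA mulfV ?scale1r // tnz.
apply: (ext_dl dir (hattheta i0 j0 \o G) idfun kb (Hdl j0)) => n j0n kbn y /=.
rewrite (GP n j0n y) /= /c (Hkb n kbn) linearZZ (HN i0 j0 ij n j0n y).
by rewrite scalerA mulVf ?scale1r // tnz.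
Qed.
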